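(* (1) $\mathbb{S}_1^*=K^*(1+F)^*\simeq K^*\times\mathrm{GL}_\infty(K)$. (2) $Z(\mathbb{S}_1^* )=K^*$ and $Z((1+F)^* )=\{1\}$. (3) $\mathrm{Inn}(\mathbb{S}_1)\simeq\mathrm{GL}_\infty(K)$ via $\omega_u\leftrightarrow u$ for $u\in(1+F)^*$.
   Context: $K$ is a field of characteristic zero. $\mathbb{S}_1=K\langle x,y\mid yx=1\rangle$; $\mathbb{S}_1^*$ is its group of units and $Z(G)$ denotes the centre of a group $G$. For $i,j\in\mathbb{N}$, $E_{ij}:=x^iy^j-x^{i+1}y^{j+1}$, and $F=\bigoplus_{i,j}KE_{ij}$, an ideal isomorphic to the algebra $M_\infty(K)=\bigcup_{d\ge1}M_d(K)$ of $\mathbb{N}\times\mathbb{N}$ matrices with finitely many nonzero entries. $(1+F)^*$ is the group of units of the monoid $1+F$, and $\mathrm{GL}_\infty(K)$ is the group of units of $1+M_\infty(K)$. $\mathrm{Inn}(\mathbb{S}_1)=\{\omega_u:a\mapsto uau^{-1}\mid u\in\mathbb{S}_1^*\}$. *)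

(* Defs.v *)
From HB Require Import structures.
From mathcomp Require Import all_boot all_order all_algebra.
Set Implicit Arguments. Unset Strict Implicit. Unset Printing Implicit Defensive.
Import GRing.Theory.
Local Open Scope ring_scope.

(* Elements of S_1 = K<x,y | yx = 1> are represented through the standard
   K-basis {x^i y^j : i,j in N}: an element is a finitely supported family of
   coefficients (c_ij), stored as p : {poly {poly K}} with c_ij = p`_i`_j.
   The same carrier represents M_oo(K) (finitely supported N x N matrices,
   entry (i,j) = m`_i`_j). *)
Section Jacobson.
Variable K : fieldType.

Definition bas (i j : nat) : {poly {poly K}} := ('X^j : {poly K}) *: 'X^i.

Definition sc (c : K) : {poly {poly K}} := (c%:P)%:P.

(* multiplication of S_1:  x^i y^j * x^k y^l = x^(i + (k - j)) y^(l + (j - k))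
   (truncated subtraction), extended bilinearly. *)
Definition smul (p q : {poly {poly K}}) : {poly {poly K}} :=
  \sum_(i < size p) \sum_(j < size p`_i) \sum_(k < size q) \sum_(l < size q`_k)
     (p`_i`_j * q`_k`_l)%:P *: bas (i + (k - j)) (l + (j - k)).

Definition sone : {poly {poly K}} := bas 0 0.

Definition s1unit (u : {poly {poly K}}) : Prop :=
  exists v, smul u v = sone /\ smul v u = sone.

Definition mmul (m n : {poly {poly K}}) : {poly {poly K}} :=
  \sum_(i < size m) \sum_(k < size m`_i) \sum_(j < size n`_k)
     (m`_i`_k * n`_k`_j)%:P *: bas i j.

(* multiplication of the monoid 1 + M_oo(K), written on the M_oo-part:
   (1 + a)(1 + b) = 1 + (a + b + ab) *)
Definition circ (a b : {poly {poly K}}) : {poly {poly K}} := a + b + mmul a b.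

(* 1 + a is in GL_oo(K) (units of the monoid 1 + M_oo(K)) *)
Definition inGL (a : {poly {poly K}}) : Prop :=
  exists b, circ a b = 0 /\ circ b a = 0.

Definition Eij (i j : nat) : {poly {poly K}} := bas i j - bas i.+1 j.+1.

Definition toF (m : {poly {poly K}}) : {poly {poly K}} :=
  \sum_(i < size m) \sum_(j < size m`_i) (m`_i`_j)%:P *: Eij i j.

Definition inF (p : {poly {poly K}}) : Prop := exists m, p = toF m.

Definition in1F (u : {poly {poly K}}) : Prop :=
  inF (u - sone) /\
  exists v, inF (v - sone) /\ smul u v = sone /\ smul v u = sone.

Definition uF (a : {poly {poly K}}) : {poly {poly K}} := sone + toF a.

(* f = omega_u, i.e. f(s) = u s u^{-1} for all s (for u a unit this is
   equivalent to f(s) u = u s for all s) *)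
Definition conj_by (u : {poly {poly K}}) (f : {poly {poly K}} -> {poly {poly K}}) : Prop :=
  forall s, smul (f s) u = smul u s.

End Jacobson.

(* Main.v *)
Require Import Defs.
From HB Require Import structures.
From mathcomp Require Import all_boot all_order all_algebra.
From mathcomp Require Import zify ring.
Set Implicit Arguments. Unset Strict Implicit. Unset Printing Implicit Defensive.
Import GRing.Theory.
Local Open Scope ring_scope.

Section S.
Variable K : fieldType.
Local Notation P := {poly {poly K}}.
Implicit Types (p q r m w : P) (c : K) (S T : {poly K}).

Lemma polyPP (p q : P) : (forall i j, p`_i`_j = q`_i`_j) -> p = q.
Proof. move=> h; apply/polyP=> i; apply/polyP=> j; exact: h. Qed.
Lemma cfD (p q : P) i j : (p+q)`_i`_j = p`_i`_j + q`_i`_j.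
Proof. by rewrite !coefD. Qed.
Lemma cfN (p : P) i j : (-p)`_i`_j = - p`_i`_j.
Proof. by rewrite !coefN. Qed.
Lemma cfB (p q : P) i j : (p-q)`_i`_j = p`_i`_j - q`_i`_j.
Proof. by rewrite !coefB. Qed.
Lemma cf0 i j : (0 : P)`_i`_j = 0.
Proof. by rewrite !coef0. Qed.
Lemma cfZ (c : K) (p : P) i j : (c%:P *: p)`_i`_j = c * p`_i`_j.
Proof. by rewrite coefZ coefCM. Qed.
Lemma cf_bas a b i j : (bas K a b)`_i`_j = if (i == a) && (j == b) then 1 else 0.
Proof.
rewrite /bas coefZ coefXn; case: (i == a) => /=; last by rewrite mulr0 coef0.
by rewrite mulr1 coefXn; case: (j == b).
Qed.
Lemma cf_sum I (r : seq I) (Q : pred I) (F : I -> P) i j :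
  (\sum_(k <- r | Q k) F k)`_i`_j = \sum_(k <- r | Q k) (F k)`_i`_j.
Proof. by rewrite !coef_sum. Qed.

Lemma sum_widen (T : nmodType) n N (F : nat -> T) : (n <= N)%N ->
  (forall i, (n <= i < N)%N -> F i = 0) -> \sum_(i < n) F i = \sum_(i < N) F i.
Proof.
move=> le h; rewrite -!(big_mkord xpredT) (@big_cat_nat _ _ _ n 0 N _ _ (leq0n n) le) /=.
by rewrite [X in _ + X]big1_seq ?addr0 // => i; rewrite mem_index_iota => /h.
Qed.

Lemma sum_single (T : nmodType) N a (aN : (a < N)%N) (F : 'I_N -> T) :
  (forall i : 'I_N, (i : nat) != a -> F i = 0) -> \sum_(i < N) F i = F (Ordinal aN).
Proof.
move=> h; rewrite (bigD1 (Ordinal aN)) //= big1 ?addr0 // => i.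
Qed.

Lemma idem0 (V : zmodType) (x : V) : x = x + x -> x = 0.
Proof. by move=> h; have := congr1 (fun y => y - x) h; rewrite addrK subrr. Qed.

Definition supp N (p : P) := forall i j, (N <= i)%N || (N <= j)%N -> p`_i`_j = 0.

Lemma supp_size N p : supp N p -> (size p <= N)%N.
Proof.
move=> h; apply/leq_sizeP => i Hi; apply/polyP => j; rewrite coef0; apply: h.
by rewrite Hi.
Qed.
Lemma supp_size2 N (p : P) (i : nat) : supp N p -> (size (p`_i)%R <= N)%N.
Proof. by move=> h; apply/leq_sizeP => j Hj; apply: h; rewrite Hj orbT. Qed.

Lemma supp_mono N M p : (N <= M)%N -> supp N p -> supp M p.
Proof.
move=> le h i j H; apply: h; case/orP: H => H; apply/orP; [left|right];
  exact: leq_trans H.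
Qed.

Lemma supp_ex p : exists N, supp N p.
Proof.
exists (size p + \max_(i < size p) size (p`_i)%R)%N => i j /orP[] H.
  have -> : p`_i = 0.
 by apply: nth_default; exact: leq_trans (leq_addr _ _) H.
  by rewrite coef0.
case: (ltnP i (size p)) => Hi; last first.
  have -> : p`_i = 0 by apply: nth_default.
  by rewrite coef0.
apply: nth_default.
have := @leq_bigmax _ (fun i : 'I_(size p) => size (p`_i)%R) (Ordinal Hi) => /= h.
exact: leq_trans h (leq_trans (leq_addl (size p) _) H).
Qed.

Lemma supp_ex2 p q : exists N, supp N p /\ supp N q.
Proof.
case: (supp_ex p) => N1 h1; case: (supp_ex q) => N2 h2.
exists (maxn N1 N2); split; [apply: supp_mono h1|apply: supp_mono h2];
  by rewrite ?leq_maxl ?leq_maxr.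
Qed.

Lemma supp_ex3 p q r : exists N, [/\ supp N p, supp N q & supp N r].
Proof.
case: (supp_ex2 p q) => N1 [h1 h2]; case: (supp_ex r) => N2 h3.
exists (maxn N1 N2); split; [apply: supp_mono h1|apply: supp_mono h2|apply: supp_mono h3];
  by rewrite ?leq_maxl ?leq_maxr.
Qed.

Lemma supp_bas N a b : (a < N)%N -> (b < N)%N -> supp N (bas K a b).
Proof.
move=> aN bN i j H; rewrite cf_bas.
case: eqP => [Ei|] //=; case: eqP => [Ej|] //=; subst.
by move: H; lia.
Qed.

Lemma widen2 (T : nmodType) N (p : P) (G : nat -> nat -> T) : supp N p ->
  (forall i j, p`_i`_j = 0 -> G i j = 0) ->
  \sum_(i < size p) \sum_(j < size p`_i) G i j = \sum_(i < N) \sum_(j < N) G i j.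
Proof.
move=> sp hG; rewrite (sum_widen (F := fun i => \sum_(j < size p`_i) G i j) (supp_size sp)); last first.
  move=> i /andP[Hi _]; rewrite big1 // => j _; apply: hG.
  by move: (nat_of_ord j) => k; rewrite (nth_default 0 Hi) coef0.
apply: eq_bigr => i _; apply: (sum_widen (F := fun j => G i j)); first exact: supp_size2.
by move=> j /andP[Hj _]; apply: hG; exact: nth_default.
Qed.

Lemma smulE N p q : supp N p -> supp N q -> smul p q =
  \sum_(i<N)\sum_(j<N)\sum_(k<N)\sum_(l<N)
     (p`_i`_j * q`_k`_l)%:P *: bas K (i + (k-j)) (l + (j-k)).
Proof.
move=> sp sq; rewrite /smul.
transitivity (\sum_(i < size p) \sum_(j < size p`_i) \sum_(k<N)\sum_(l<N)
     (p`_i`_j * q`_k`_l)%:P *: bas K (i + (k-j)) (l + (j-k))).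
  apply: eq_bigr => i _; apply: eq_bigr => j _.
  apply: (widen2 (G := fun k l => (p`_i`_j * q`_k`_l)%:P *: bas K (i + (k-j)) (l + (j-k)))) => // k l ->.
  by rewrite mulr0 polyC0 scale0r.
apply: (widen2 (G := fun i j => \sum_(k<N)\sum_(l<N)
     (p`_i`_j * q`_k`_l)%:P *: bas K (i + (k-j)) (l + (j-k)))) => // i j h.
by apply: big1 => k _; apply: big1 => l _; rewrite h mul0r polyC0 scale0r.
Qed.


Lemma supp0 N : supp N 0.
Proof. by move=> i j _; rewrite cf0. Qed.
Lemma suppD N p q : supp N p -> supp N q -> supp N (p + q).
Proof. by move=> h1 h2 i j H; rewrite cfD h1 ?h2 ?addr0. Qed.
Lemma suppN N p : supp N p -> supp N (- p).
Proof. by move=> h1 i j H; rewrite cfN h1 ?oppr0. Qed.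
Lemma suppZ N c p : supp N p -> supp N (c%:P *: p).
Proof. by move=> h1 i j H; rewrite cfZ h1 ?mulr0. Qed.

Lemma smulDl p p' q : smul (p + p') q = smul p q + smul p' q.
Proof.
case: (supp_ex3 p p' q) => N [h1 h2 h3].
rewrite (smulE (suppD h1 h2) h3) (smulE h1 h3) (smulE h2 h3).
rewrite -big_split; apply: eq_bigr => i _; rewrite -big_split; apply: eq_bigr => j _.
rewrite -big_split; apply: eq_bigr => k _; rewrite -big_split; apply: eq_bigr => l _.
by rewrite cfD mulrDl polyCD scalerDl.
Qed.

Lemma smulDr p q q' : smul p (q + q') = smul p q + smul p q'.
Proof.
case: (supp_ex3 p q q') => N [h1 h2 h3].
rewrite (smulE h1 (suppD h2 h3)) (smulE h1 h2) (smulE h1 h3).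
rewrite -big_split; apply: eq_bigr => i _; rewrite -big_split; apply: eq_bigr => j _.
rewrite -big_split; apply: eq_bigr => k _; rewrite -big_split; apply: eq_bigr => l _.
by rewrite cfD mulrDr polyCD scalerDl.
Qed.

Lemma smulZl c p q : smul (c%:P *: p) q = c%:P *: smul p q.
Proof.
case: (supp_ex2 p q) => N [h1 h2].
rewrite (smulE (suppZ c h1) h2) (smulE h1 h2).
rewrite scaler_sumr; apply: eq_bigr => i _; rewrite scaler_sumr; apply: eq_bigr => j _.
rewrite scaler_sumr; apply: eq_bigr => k _; rewrite scaler_sumr; apply: eq_bigr => l _.
by rewrite cfZ scalerA -polyCM mulrA.
Qed.

Lemma smulZr c p q : smul p (c%:P *: q) = c%:P *: smul p q.
Proof.
case: (supp_ex2 p q) => N [h1 h2].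
rewrite (smulE h1 (suppZ c h2)) (smulE h1 h2).
rewrite scaler_sumr; apply: eq_bigr => i _; rewrite scaler_sumr; apply: eq_bigr => j _.
rewrite scaler_sumr; apply: eq_bigr => k _; rewrite scaler_sumr; apply: eq_bigr => l _.
by rewrite cfZ scalerA -polyCM mulrCA.
Qed.

Lemma smul0l q : smul 0 q = 0.
Proof. by apply: idem0; rewrite -smulDl addr0. Qed.
Lemma smul0r p : smul p 0 = 0.
Proof. by apply: idem0; rewrite -smulDr addr0. Qed.
Lemma smulNl p q : smul (- p) q = - smul p q.
Proof. by apply/eqP; rewrite -subr_eq0 opprK -smulDl addNr smul0l. Qed.
Lemma smulNr p q : smul p (- q) = - smul p q.
Proof. by apply/eqP; rewrite -subr_eq0 opprK -smulDr addNr smul0r. Qed.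
Lemma smulBl p p' q : smul (p - p') q = smul p q - smul p' q.
Proof. by rewrite smulDl smulNl. Qed.
Lemma smulBr p q q' : smul p (q - q') = smul p q - smul p q'.
Proof. by rewrite smulDr smulNr. Qed.

Lemma smul_suml I (r : seq I) (Q : pred I) (F : I -> P) q :
  smul (\sum_(i <- r | Q i) F i) q = \sum_(i <- r | Q i) smul (F i) q.
Proof. exact: (big_morph (fun p => smul p q) (fun p p' => smulDl p p' q) (smul0l q)). Qed.
Lemma smul_sumr I (r : seq I) (Q : pred I) (F : I -> P) p :
  smul p (\sum_(i <- r | Q i) F i) = \sum_(i <- r | Q i) smul p (F i).
Proof. exact: (big_morph (fun q => smul p q) (fun q q' => smulDr p q q') (smul0r p)). Qed.

Lemma basE N p : supp N p -> p = \sum_(i<N)\sum_(j<N) (p`_i`_j)%:P *: bas K i j.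
Proof.
move=> sp; apply: polyPP => a b; rewrite cf_sum.
under eq_bigr => i _ do rewrite cf_sum.
case: (ltnP a N) => aN; last first.
  rewrite sp ?aN // big1 // => i _; rewrite big1 // => j _; rewrite cfZ cf_bas.
  case: eqP => E /=; last by rewrite mulr0.
  by have := ltn_ord i; rewrite -E; lia.
case: (ltnP b N) => bN; last first.
  rewrite sp ?bN ?orbT // big1 // => i _; rewrite big1 // => j _; rewrite cfZ cf_bas.
  case: (b =P j) => E /=; last by rewrite andbF mulr0.
  by have := ltn_ord j; rewrite -E; lia.
rewrite (sum_single aN) => [|i ia]; last first.
  by rewrite big1 // => j _; rewrite cfZ cf_bas eq_sym (negbTE ia) mulr0.
rewrite (sum_single bN) => [|j jb]; last first.
  by rewrite cfZ cf_bas [b == j]eq_sym (negbTE jb) andbF mulr0.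
by rewrite cfZ cf_bas !eqxx mulr1.
Qed.

Lemma smul_bas (a b c d : nat) : smul (bas K a b) (bas K c d) = bas K (a + (c - b)) (d + (b - c)).
Proof.
set N := (maxn (maxn a b) (maxn c d)).+1.
have aN : (a < N)%N by rewrite /N; lia.
have bN : (b < N)%N by rewrite /N; lia.
have cN : (c < N)%N by rewrite /N; lia.
have dN : (d < N)%N by rewrite /N; lia.
rewrite (smulE (supp_bas aN bN) (supp_bas cN dN)).
rewrite (sum_single aN) => [|i ia]; last first.
  by rewrite big1 // => j _; rewrite big1 // => k _; rewrite big1 // => l _;
    rewrite cf_bas (negbTE ia) mul0r polyC0 scale0r.
rewrite (sum_single bN) => [|j jb]; last first.
  by rewrite big1 // => k _; rewrite big1 // => l _;
    rewrite cf_bas (negbTE jb) andbF mul0r polyC0 scale0r.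
rewrite (sum_single cN) => [|k kc]; last first.
  by rewrite big1 // => l _; rewrite !cf_bas !eqxx (negbTE kc) /= mulr0 polyC0 scale0r.
rewrite (sum_single dN) => [|l ld]; last first.
  by rewrite !cf_bas !eqxx (negbTE ld) andbF /= mulr0 polyC0 scale0r.
by rewrite !cf_bas !eqxx mulr1 scale1r.
Qed.


Lemma lin_ext (f g : P -> P) :
  (forall p p', f (p + p') = f p + f p') -> (forall c p, f (c%:P *: p) = c%:P *: f p) ->
  (forall p p', g (p + p') = g p + g p') -> (forall c p, g (c%:P *: p) = c%:P *: g p) ->
  (forall a b, f (bas K a b) = g (bas K a b)) -> forall p, f p = g p.
Proof.
move=> fD fZ gD gZ h p; case: (supp_ex p) => N sp; rewrite (basE sp).
have f0 : f 0 = 0 by apply: idem0; rewrite -fD addr0.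
have g0 : g 0 = 0 by apply: idem0; rewrite -gD addr0.
rewrite (big_morph f fD f0) (big_morph g gD g0); apply: eq_bigr => i _.
rewrite (big_morph f fD f0) (big_morph g gD g0); apply: eq_bigr => j _.
by rewrite fZ gZ h.
Qed.

Lemma smul_basA (a b c d e f : nat) :
  smul (smul (bas K a b) (bas K c d)) (bas K e f) =
  smul (bas K a b) (smul (bas K c d) (bas K e f)).
Proof. by rewrite !smul_bas; congr bas; lia. Qed.

Lemma smulA p q r : smul (smul p q) r = smul p (smul q r).
Proof.
move: p; apply: lin_ext.
- by move=> p p'; rewrite !smulDl.
- by move=> c p; rewrite !smulZl.
- by move=> p p'; rewrite !smulDl.
- by move=> c p; rewrite !smulZl.
move=> a b; move: q; apply: lin_ext.
- by move=> q q'; rewrite smulDr smulDl.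
- by move=> c q; rewrite smulZr smulZl.
- by move=> q q'; rewrite smulDl smulDr.
- by move=> c q; rewrite smulZl smulZr.
move=> c d; move: r; apply: lin_ext.
- by move=> r r'; rewrite !smulDr.
- by move=> e r; rewrite !smulZr.
- by move=> r r'; rewrite !smulDr.
- by move=> e r; rewrite !smulZr.
exact: smul_basA.
Qed.

Lemma smul1l p : smul (sone K) p = p.
Proof.
move: p; apply: (lin_ext (g := id)) => //.
- by move=> p p'; rewrite smulDr.
- by move=> c p; rewrite smulZr.
by move=> a b; rewrite /sone smul_bas /= add0n subn0 sub0n addn0.
Qed.

Lemma smul1r p : smul p (sone K) = p.
Proof.
move: p; apply: (lin_ext (g := id)) => //.
- by move=> p p'; rewrite smulDl.
- by move=> c p; rewrite smulZl.
by move=> a b; rewrite /sone smul_bas /= sub0n subn0 addn0 add0n.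
Qed.

Lemma scE c : sc c = c%:P *: sone K.
Proof.
apply: polyPP => i j; rewrite cfZ cf_bas /sc !coefC.
case: (i == 0%N) => /=; last by rewrite coef0 mulr0.
by rewrite coefC; case: (j == 0%N); rewrite ?mulr1 ?mulr0.
Qed.

Lemma smul_scl c p : smul (sc c) p = c%:P *: p.
Proof. by rewrite scE smulZl smul1l. Qed.
Lemma smul_scr c p : smul p (sc c) = c%:P *: p.
Proof. by rewrite scE smulZr smul1r. Qed.


Local Notation E := (Eij K).

Lemma toFE N m : supp N m -> toF m = \sum_(i<N)\sum_(j<N) (m`_i`_j)%:P *: E i j.
Proof.
move=> sm; rewrite /toF.
apply: (widen2 (G := fun i j => (m`_i`_j)%:P *: E i j)) => // i j ->.
by rewrite polyC0 scale0r.
Qed.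

Lemma toFD m m' : toF (m + m') = toF m + toF m'.
Proof.
case: (supp_ex2 m m') => N [h1 h2].
rewrite (toFE (suppD h1 h2)) (toFE h1) (toFE h2).
rewrite -big_split; apply: eq_bigr => i _; rewrite -big_split; apply: eq_bigr => j _.
by rewrite cfD polyCD scalerDl.
Qed.

Lemma toFZ c m : toF (c%:P *: m) = c%:P *: toF m.
Proof.
case: (supp_ex m) => N h1.
rewrite (toFE (suppZ c h1)) (toFE h1).
rewrite scaler_sumr; apply: eq_bigr => i _; rewrite scaler_sumr; apply: eq_bigr => j _.
by rewrite cfZ polyCM scalerA.
Qed.

Lemma toF0 : toF (0 : P) = 0.
Proof. by apply: idem0; rewrite -toFD addr0. Qed.
Lemma toFN m : toF (- m) = - toF m.
Proof. by apply/eqP; rewrite -subr_eq0 opprK -toFD addNr toF0. Qed.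
Lemma toFB m m' : toF (m - m') = toF m - toF m'.
Proof. by rewrite toFD toFN. Qed.

Lemma toF_bas a b : toF (bas K a b) = E a b.
Proof.
set N := (maxn a b).+1.
have aN : (a < N)%N by rewrite /N; lia.
have bN : (b < N)%N by rewrite /N; lia.
rewrite (toFE (supp_bas aN bN)).
rewrite (sum_single aN) => [|i ia]; last first.
  by rewrite big1 // => j _; rewrite cf_bas (negbTE ia) polyC0 scale0r.
rewrite (sum_single bN) => [|j jb]; last first.
  by rewrite cf_bas (negbTE jb) andbF polyC0 scale0r.
by rewrite cf_bas !eqxx scale1r.
Qed.

Lemma mmulE N m (n : P) : supp N m -> supp N n -> mmul m n =
  \sum_(i<N)\sum_(k<N)\sum_(j<N) (m`_i`_k * n`_k`_j)%:P *: bas K i j.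
Proof.
move=> sm sn; rewrite /mmul.
transitivity (\sum_(i < size m) \sum_(k < size m`_i) \sum_(j<N)
     (m`_i`_k * n`_k`_j)%:P *: bas K i j).
  apply: eq_bigr => i _; apply: eq_bigr => k _.
  apply: (sum_widen (F := fun j => (m`_i`_k * n`_k`_j)%:P *: bas K i j)); first exact: supp_size2.
  by move=> j /andP[Hj _]; rewrite (nth_default 0 Hj) mulr0 polyC0 scale0r.
apply: (widen2 (G := fun i k => \sum_(j<N)
     (m`_i`_k * n`_k`_j)%:P *: bas K i j)) => // i k h.
by apply: big1 => j _; rewrite h mul0r polyC0 scale0r.
Qed.

Lemma mmulDl p p' q : mmul (p + p') q = mmul p q + mmul p' q.
Proof.
case: (supp_ex3 p p' q) => N [h1 h2 h3].
rewrite (mmulE (suppD h1 h2) h3) (mmulE h1 h3) (mmulE h2 h3).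
rewrite -big_split; apply: eq_bigr => i _; rewrite -big_split; apply: eq_bigr => j _.
rewrite -big_split; apply: eq_bigr => k _.
by rewrite cfD mulrDl polyCD scalerDl.
Qed.

Lemma mmulDr p q q' : mmul p (q + q') = mmul p q + mmul p q'.
Proof.
case: (supp_ex3 p q q') => N [h1 h2 h3].
rewrite (mmulE h1 (suppD h2 h3)) (mmulE h1 h2) (mmulE h1 h3).
rewrite -big_split; apply: eq_bigr => i _; rewrite -big_split; apply: eq_bigr => j _.
rewrite -big_split; apply: eq_bigr => k _.
by rewrite cfD mulrDr polyCD scalerDl.
Qed.

Lemma mmulZl c p q : mmul (c%:P *: p) q = c%:P *: mmul p q.
Proof.
case: (supp_ex2 p q) => N [h1 h2].
rewrite (mmulE (suppZ c h1) h2) (mmulE h1 h2).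
rewrite scaler_sumr; apply: eq_bigr => i _; rewrite scaler_sumr; apply: eq_bigr => j _.
rewrite scaler_sumr; apply: eq_bigr => k _.
by rewrite cfZ scalerA -polyCM mulrA.
Qed.

Lemma mmulZr c p q : mmul p (c%:P *: q) = c%:P *: mmul p q.
Proof.
case: (supp_ex2 p q) => N [h1 h2].
rewrite (mmulE h1 (suppZ c h2)) (mmulE h1 h2).
rewrite scaler_sumr; apply: eq_bigr => i _; rewrite scaler_sumr; apply: eq_bigr => j _.
rewrite scaler_sumr; apply: eq_bigr => k _.
by rewrite cfZ scalerA -polyCM mulrCA.
Qed.

Lemma mmul_bas (a b c d : nat) :
  mmul (bas K a b) (bas K c d) = if b == c then bas K a d else 0.
Proof.
set N := (maxn (maxn a b) (maxn c d)).+1.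
have aN : (a < N)%N by rewrite /N; lia.
have bN : (b < N)%N by rewrite /N; lia.
have cN : (c < N)%N by rewrite /N; lia.
have dN : (d < N)%N by rewrite /N; lia.
rewrite (mmulE (supp_bas aN bN) (supp_bas cN dN)).
rewrite (sum_single aN) => [|i ia]; last first.
  by rewrite big1 // => j _; rewrite big1 // => k _;
    rewrite cf_bas (negbTE ia) mul0r polyC0 scale0r.
rewrite (sum_single bN) => [|j jb]; last first.
  by rewrite big1 // => k _; rewrite cf_bas (negbTE jb) andbF mul0r polyC0 scale0r.
rewrite cf_bas !eqxx /=.
case: (b =P c) => [<-|bc]; last first.
  by rewrite big1 // => k _; rewrite cf_bas (introF eqP bc) /= mulr0 polyC0 scale0r.
rewrite (sum_single dN) => [|k kd]; last first.
  by rewrite cf_bas (negbTE kd) andbF /= mulr0 polyC0 scale0r.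
by rewrite cf_bas !eqxx /= mulr1 scale1r.
Qed.

Lemma smul_E (a b c d : nat) : smul (E a b) (E c d) = if b == c then E a d else 0.
Proof.
rewrite /Eij !smulBl !smulBr !smul_bas.
case: (ltngtP b c) => h.
- have -> : (a + (c.+1 - b) = (a + (c - b)).+1)%N by lia.
  have -> : (a.+1 + (c - b.+1) = a + (c - b))%N by lia.
  have -> : (a.+1 + (c.+1 - b.+1) = (a + (c - b)).+1)%N by lia.
  have -> : (d + (b - c) = d)%N by lia.
  have -> : (d.+1 + (b - c.+1) = d.+1)%N by lia.
  have -> : (d + (b.+1 - c) = d)%N by lia.
  have -> : (d.+1 + (b.+1 - c.+1) = d.+1)%N by lia.
  by rewrite subrr.
- have -> : (a + (c.+1 - b) = a)%N by lia.
  have -> : (a.+1 + (c - b.+1) = a.+1)%N by lia.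
  have -> : (a.+1 + (c.+1 - b.+1) = a.+1)%N by lia.
  have -> : (a + (c - b) = a)%N by lia.
  have -> : (d.+1 + (b - c.+1) = d + (b - c))%N by lia.
  have -> : (d + (b.+1 - c) = (d + (b - c)).+1)%N by lia.
  have -> : (d.+1 + (b.+1 - c.+1) = (d + (b - c)).+1)%N by lia.
  by rewrite !subrr.
- have -> : (a + (c.+1 - b) = a.+1)%N by lia.
  have -> : (a.+1 + (c - b.+1) = a.+1)%N by lia.
  have -> : (a.+1 + (c.+1 - b.+1) = a.+1)%N by lia.
  have -> : (a + (c - b) = a)%N by lia.
  have -> : (d.+1 + (b - c.+1) = d.+1)%N by lia.
  have -> : (d + (b.+1 - c) = d.+1)%N by lia.
  have -> : (d.+1 + (b.+1 - c.+1) = d.+1)%N by lia.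
  have -> : (d + (b - c) = d)%N by lia.
  by rewrite opprB addrA subrK.
Qed.


Lemma toF_mul m (n : P) : toF (mmul m n) = smul (toF m) (toF n).
Proof.
move: m; apply: lin_ext.
- by move=> p p'; rewrite mmulDl toFD.
- by move=> c p; rewrite mmulZl toFZ.
- by move=> p p'; rewrite toFD smulDl.
- by move=> c p; rewrite toFZ smulZl.
move=> a b; move: n; apply: lin_ext.
- by move=> p p'; rewrite mmulDr toFD.
- by move=> c p; rewrite mmulZr toFZ.
- by move=> p p'; rewrite toFD smulDr.
- by move=> c p; rewrite toFZ smulZr.
move=> c d; rewrite mmul_bas !toF_bas smul_E.
by case: (b == c); rewrite ?toF_bas ?toF0.
Qed.

Lemma inF0 : inF (0 : P).
Proof. by exists 0; rewrite toF0. Qed.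
Lemma inFD p q : inF p -> inF q -> inF (p + q).
Proof. by case=> m -> [n ->]; exists (m + n); rewrite toFD. Qed.
Lemma inFN p : inF p -> inF (- p).
Proof. by case=> m ->; exists (- m); rewrite toFN. Qed.
Lemma inFB p q : inF p -> inF q -> inF (p - q).
Proof. by move=> h1 h2; apply: inFD => //; apply: inFN. Qed.
Lemma inFZ c p : inF p -> inF (c%:P *: p).
Proof. by case=> m ->; exists (c%:P *: m); rewrite toFZ. Qed.
Lemma inF_E a b : inF (E a b).
Proof. by exists (bas K a b); rewrite toF_bas. Qed.
Lemma inF_toF m : inF (toF m).
Proof. by exists m. Qed.

Lemma uF_mul (a b : P) : uF (circ a b) = smul (uF a) (uF b).
Proof.
rewrite /uF /circ !toFD toF_mul !smulDl !smulDr smul1l smul1r smul1l.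
by rewrite !addrA [sone K + toF a + toF b]addrAC.
Qed.

Lemma uF0 : uF (0 : P) = sone K.
Proof. by rewrite /uF toF0 addr0. Qed.

Definition tr0 (p : P) : K := \sum_(i < size p) p`_i`_i * i%:R.

Lemma tr0E N p : supp N p -> tr0 p = \sum_(i < N) p`_i`_i * i%:R.
Proof.
move=> sp; apply: (sum_widen (F := fun i => p`_i`_i * i%:R)); first exact: supp_size.
by move=> i /andP[Hi _]; rewrite (nth_default 0 Hi) coef0 mul0r.
Qed.

Lemma tr0D p q : tr0 (p + q) = tr0 p + tr0 q.
Proof.
case: (supp_ex2 p q) => N [h1 h2].
rewrite (tr0E (suppD h1 h2)) (tr0E h1) (tr0E h2) -big_split; apply: eq_bigr => i _.
by rewrite cfD mulrDl.
Qed.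
Lemma tr0Z c p : tr0 (c%:P *: p) = c * tr0 p.
Proof.
case: (supp_ex p) => N h1.
rewrite (tr0E (suppZ c h1)) (tr0E h1) mulr_sumr; apply: eq_bigr => i _.
by rewrite cfZ mulrA.
Qed.
Lemma tr00 : tr0 (0 : P) = 0.
Proof. by apply: idem0; rewrite -tr0D addr0. Qed.
Lemma tr0N p : tr0 (- p) = - tr0 p.
Proof. by apply/eqP; rewrite -subr_eq0 opprK -tr0D addNr tr00. Qed.
Lemma tr0B p q : tr0 (p - q) = tr0 p - tr0 q.
Proof. by rewrite tr0D tr0N. Qed.

Lemma tr0_bas a b : tr0 (bas K a b) = (if a == b then a else 0%N)%:R.
Proof.
have aN : (a < (maxn a b).+1)%N by lia.
have bN : (b < (maxn a b).+1)%N by lia.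
rewrite (tr0E (supp_bas aN bN)) (sum_single aN) => [|i ia]; last first.
  by rewrite cf_bas (negbTE ia) mul0r.
by rewrite cf_bas eqxx /=; case: (a == b); rewrite ?mul1r ?mul0r.
Qed.

Lemma lin_extK (f : P -> K) :
  (forall p p', f (p + p') = f p + f p') -> (forall c p, f (c%:P *: p) = c * f p) ->
  (forall a b, f (bas K a b) = 0) -> forall p, f p = 0.
Proof.
move=> fD fZ h p; case: (supp_ex p) => N sp; rewrite (basE sp).
have f0 : f 0 = 0 by apply: idem0; rewrite -fD addr0.
rewrite (big_morph f fD f0) big1 // => i _.
by rewrite (big_morph f fD f0) big1 // => j _; rewrite fZ h mulr0.
Qed.

Lemma natK4 (x1 x2 x3 x4 : nat) : (x1 + x4 = x3 + x2)%N ->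
  x1%:R - x2%:R - (x3%:R - x4%:R) = 0 :> K.
Proof.
move=> H.
have -> : x1%:R - x2%:R - (x3%:R - x4%:R) = (x1 + x4)%:R - (x3 + x2)%:R :> K.
  by rewrite !natrD; ring.
by rewrite H subrr.
Qed.

Lemma tr0_cyc (a f : P) : inF f -> tr0 (smul a f) = tr0 (smul f a).
Proof.
case=> m ->; apply/eqP; rewrite -subr_eq0; apply/eqP; move: m.
apply: lin_extK.
- by move=> p p'; rewrite toFD smulDr smulDl !tr0D; ring.
- by move=> c p; rewrite toFZ smulZr smulZl !tr0Z; ring.
move=> i j; rewrite toF_bas; move: a; apply: lin_extK.
- by move=> p p'; rewrite smulDr smulDl !tr0D; ring.
- by move=> c p; rewrite smulZr smulZl !tr0Z; ring.
move=> k l; rewrite /Eij smulBr smulBl !smul_bas !tr0B !tr0_bas.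
apply: natK4; repeat (case: eqP => ?); lia.
Qed.


Lemma mono_fac n : forall (A Bq : {poly K}), A * Bq = 'X^n ->
  exists c a, c != 0 /\ A = c%:P * 'X^a.
Proof.
elim: n => [|n IH] A Bq h.
  have A0 : A != 0.
    by apply/eqP => E; move: h; rewrite E mul0r expr0 => /eqP; rewrite eq_sym oner_eq0.
  have B0 : Bq != 0.
    by apply/eqP => E; move: h; rewrite E mulr0 expr0 => /eqP; rewrite eq_sym oner_eq0.
  have := size_mul A0 B0; rewrite h expr0 size_poly1 => hs.
  have sA : (size A <= 1)%N.
    have : (0 < size Bq)%N by rewrite size_poly_gt0.
    by move: hs; case: (size A) => [|k] /=; [lia|]; case: (size Bq) => //; lia.
  exists A`_0, 0%N; split; last by rewrite expr0 mulr1 {1}(size1_polyC sA).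
  by apply/eqP => E; move/eqP: A0; apply; rewrite (size1_polyC sA) E polyC0.
have : A.[0] * Bq.[0] = 0 by rewrite -hornerM h hornerXn expr0n.
move/eqP; rewrite mulf_eq0 => /orP[] /eqP h0.
  have : root A 0 by rewrite /root h0.
  case/factor_theorem => A' EA; move: h; rewrite EA subr0 mulrAC exprS [_ * 'X^n]mulrC.
  move/(mulIf (negbT (polyX_eq0 K))) => /IH [c [a [c0 ->]]].
  by exists c, a.+1; split => //; rewrite exprS; ring.
have : root Bq 0 by rewrite /root h0.
case/factor_theorem => B' EB; move: h; rewrite EB subr0 mulrA exprS [_ * 'X^n]mulrC.
by move/(mulIf (negbT (polyX_eq0 K))) => /IH.
Qed.


Definition sig N (p : P) : {poly K} :=
  \sum_(i < size p) \sum_(j < size p`_i) (p`_i`_j)%:P * 'X^(i + N - j).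

Lemma sigE L N p : supp L p ->
  sig N p = \sum_(i<L)\sum_(j<L) (p`_i`_j)%:P * 'X^(i + N - j).
Proof.
move=> sp; apply: (widen2 (G := fun i j => (p`_i`_j)%:P * 'X^(i + N - j))) => // i j ->.
by rewrite polyC0 mul0r.
Qed.

Lemma sigD N p q : sig N (p + q) = sig N p + sig N q.
Proof.
case: (supp_ex2 p q) => L [h1 h2].
rewrite (sigE N (suppD h1 h2)) (sigE N h1) (sigE N h2).
rewrite -big_split; apply: eq_bigr => i _; rewrite -big_split; apply: eq_bigr => j _.
by rewrite cfD polyCD mulrDl.
Qed.
Lemma sigZ N c p : sig N (c%:P *: p) = c%:P * sig N p.
Proof.
case: (supp_ex p) => L h1.
rewrite (sigE N (suppZ c h1)) (sigE N h1).
rewrite mulr_sumr; apply: eq_bigr => i _; rewrite mulr_sumr; apply: eq_bigr => j _.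
by rewrite cfZ polyCM mulrA.
Qed.
Lemma sig0 N : sig N 0 = 0.
Proof. by apply: idem0; rewrite -sigD addr0. Qed.
Lemma sigN N p : sig N (- p) = - sig N p.
Proof. by apply/eqP; rewrite -subr_eq0 opprK -sigD addNr sig0. Qed.
Lemma sigB N p q : sig N (p - q) = sig N p - sig N q.
Proof. by rewrite sigD sigN. Qed.
Lemma sig_sum N I (r : seq I) (Q : pred I) (F : I -> P) :
  sig N (\sum_(i <- r | Q i) F i) = \sum_(i <- r | Q i) sig N (F i).
Proof. exact: (big_morph (sig N) (sigD N) (sig0 N)). Qed.

Lemma sig_bas N (a b : nat) : sig N (bas K a b) = 'X^(a + N - b).
Proof.
have aN : (a < (maxn a b).+1)%N by lia.
have bN : (b < (maxn a b).+1)%N by lia.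
rewrite (sigE N (supp_bas aN bN)).
rewrite (sum_single aN) => [|i ia]; last first.
  by rewrite big1 // => j _; rewrite cf_bas (negbTE ia) polyC0 mul0r.
rewrite (sum_single bN) => [|j jb]; last first.
  by rewrite cf_bas (negbTE jb) andbF polyC0 mul0r.
by rewrite cf_bas !eqxx /= mul1r.
Qed.

Lemma sig_mul N p q : supp N p -> supp N q ->
  sig (N + N) (smul p q) = sig N p * sig N q.
Proof.
move=> sp sq.
rewrite (sigE N sp) (sigE N sq) (smulE sp sq) sig_sum big_distrl; apply: eq_bigr => i _.
rewrite sig_sum big_distrl; apply: eq_bigr => j _.
rewrite sig_sum big_distrr; apply: eq_bigr => k _.
rewrite sig_sum big_distrr; apply: eq_bigr => l _.
rewrite sigZ sig_bas polyCM.
have -> : (i + (k - j) + (N + N) - (l + (j - k)) = (i + N - j) + (k + N - l))%N.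
  by have := ltn_ord j; have := ltn_ord l; lia.
by rewrite exprD mulrACA.
Qed.

Lemma inF_sum I (r : seq I) (Q : pred I) (F : I -> P) :
  (forall i, Q i -> inF (F i)) -> inF (\sum_(i <- r | Q i) F i).
Proof.
move=> h; exact: (big_ind (fun x : P => inF x) inF0 (@inFD) h).
Qed.

Lemma tele (a b m : nat) : inF (bas K (a + m) (b + m) - bas K a b).
Proof.
elim: m => [|m IH]; first by rewrite !addn0 subrr; exact: inF0.
have -> : bas K (a + m.+1) (b + m.+1) - bas K a b
   = (bas K (a + m) (b + m) - bas K a b) - E (a + m) (b + m).
  by rewrite /Eij !addnS; ring.
exact: inFB IH (inF_E _ _).
Qed.

Definition rep N k := bas K (k - N) (N - k).
Definition Rm N (S : {poly K}) : P := \sum_(k < size S) (S`_k)%:P *: rep N k.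

Lemma RmE L N S : (forall k, (L <= k)%N -> S`_k = 0) ->
  Rm N S = \sum_(k < L) (S`_k)%:P *: rep N k.
Proof.
move=> h; apply: (sum_widen (F := fun k => (S`_k)%:P *: rep N k)).
  by apply/leq_sizeP.
by move=> k /andP[Hk _]; rewrite (nth_default 0 Hk) polyC0 scale0r.
Qed.

Lemma RmD N S T : Rm N (S + T) = Rm N S + Rm N T.
Proof.
set L := maxn (size S) (size T).
have hS : forall k, (L <= k)%N -> S`_k = 0.
  by move=> k Hk; apply: nth_default; apply: leq_trans Hk; apply: leq_maxl.
have hT : forall k, (L <= k)%N -> T`_k = 0.
  by move=> k Hk; apply: nth_default; apply: leq_trans Hk; apply: leq_maxr.
have hST : forall k, (L <= k)%N -> (S + T)`_k = 0.
  by move=> k Hk; rewrite coefD hS ?hT ?addr0.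
rewrite (RmE N hST) (RmE N hS) (RmE N hT) -big_split; apply: eq_bigr => k _.
by rewrite coefD polyCD scalerDl.
Qed.

Lemma RmZ N c S : Rm N (c%:P * S) = c%:P *: Rm N S.
Proof.
have hS : forall k, (size S <= k)%N -> S`_k = 0 by move=> k Hk; exact: nth_default.
have hS' : forall k, (size S <= k)%N -> (c%:P * S)`_k = 0.
  by move=> k Hk; rewrite coefCM hS ?mulr0.
rewrite (RmE N hS') (RmE N hS) scaler_sumr; apply: eq_bigr => k _.
by rewrite coefCM polyCM scalerA.
Qed.

Lemma Rm0 N : Rm N 0 = 0.
Proof. by rewrite /Rm size_poly0 big_ord0. Qed.

Lemma Rm_Xn N k : Rm N 'X^k = rep N k.
Proof.
have h : forall j, (k.+1 <= j)%N -> ('X^k : {poly K})`_j = 0.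
  by move=> j Hj; rewrite coefXn; case: eqP => // E; move: Hj; rewrite E ltnn.
rewrite (RmE N h) (sum_single (ltnSn k)) => [|j jk]; last first.
  by rewrite coefXn (negbTE jk) polyC0 scale0r.
by rewrite coefXn eqxx scale1r.
Qed.

Definition col N (w : P) := forall i j, (N < j)%N -> w`_i`_j = 0.

Lemma ker_claim N w : col N w -> inF (w - Rm N (sig N w)).
Proof.
move=> cw; case: (supp_ex w) => L sw.
pose h := fun w => w - Rm N (sig N w).
have hD : forall p q, h (p + q) = h p + h q.
  by move=> p q; rewrite /h sigD RmD opprD addrACA.
have h0 : h 0 = 0 by apply: idem0; rewrite -hD addr0.
have hZ : forall c p, h (c%:P *: p) = c%:P *: h p.
  by move=> c p; rewrite /h sigZ RmZ scalerBr.
rewrite -/(h w) (basE sw) (big_morph h hD h0).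
apply: inF_sum => i _; rewrite (big_morph h hD h0); apply: inF_sum => j _.
rewrite hZ; case: (ltnP N j) => Hj.
  by rewrite cw // polyC0 scale0r; exact: inF0.
apply: inFZ; rewrite /h sig_bas Rm_Xn /rep.
have -> : (i + N - j - N = i - j)%N by lia.
have -> : (N - (i + N - j) = j - i)%N by lia.
have := tele (i - j) (j - i) (minn i j).
have -> : (i - j + minn i j = i)%N by lia.
have -> : (j - i + minn i j = j)%N by lia.
by [].
Qed.

Lemma ker_sig N w : col N w -> sig N w = 0 -> inF w.
Proof. by move=> cw s0; have := ker_claim cw; rewrite s0 Rm0 subr0. Qed.


Lemma trace_arg (n : nat) c d f g (B B' : P) : inF f -> inF g -> c * d = 1 ->
  smul B B' = bas K n n -> smul B' B = sone K ->
  smul (c%:P *: B + f) (d%:P *: B' + g) = sone K ->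
  smul (d%:P *: B' + g) (c%:P *: B + f) = sone K -> n%:R = 0 :> K.
Proof.
move=> Ff Fg cd h1 h2 Huv Hvu.
have e1 := congr1 tr0 Huv; have e2 := congr1 tr0 Hvu.
rewrite !smulDl !smulDr !smulZl !smulZr !tr0D !tr0Z h1 h2 in e1 e2.
rewrite (tr0_cyc B Fg) (tr0_cyc f Fg) tr0_bas eqxx in e1.
rewrite (tr0_cyc B' Ff) /sone tr0_bas eqxx in e2.
move: e1 e2; set X := tr0 (smul g B); set Y := tr0 (smul f B'); set Z := tr0 (smul g f).
set R := (_ * tr0 _); move=> e1 e2.
have E : c * (d * n%:R) = (c * (d * n%:R) + c * X + (d * Y + Z)) -
  (d * (c * (0%N)%:R) + d * Y + (c * X + Z)) by ring.
by move: E; rewrite e1 e2 subrr mulrA cd mul1r.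
Qed.


Lemma unit_case (hK : [pchar K] =i pred0) u v N c d (a b : nat) :
  supp N u -> supp N v -> smul u v = sone K -> smul v u = sone K ->
  sig N u = c%:P * 'X^a -> sig N v = d%:P * 'X^b -> c * d = 1 ->
  (a + b = N + N)%N -> (N <= a)%N -> inF (u - sc c) /\ inF (v - sc d).
Proof.
move=> su sv Huv Hvu Su Sv cd ab Na.
have [n [en nN]] : exists n, a = (n + N)%N /\ (n <= N)%N by exists (a - N)%N; lia.
have eb : b = (N - n)%N by lia.
have Ff : inF (u - c%:P *: bas K n 0).
  apply: (ker_sig (N := N)).
    move=> i j Hj; rewrite cfB cfZ cf_bas su; last by rewrite (ltnW Hj) orbT.
    by rewrite andbC (_ : (j == 0%N) = false) ?mulr0 ?subr0 //; apply/negbTE; lia.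
  by rewrite sigB sigZ Su sig_bas (_ : (n + N - 0 = a)%N) ?subrr //; lia.
have Fg : inF (v - d%:P *: bas K 0 n).
  apply: (ker_sig (N := N)).
    move=> i j Hj; rewrite cfB cfZ cf_bas sv; last by rewrite (ltnW Hj) orbT.
    by rewrite (_ : (j == n) = false) ?andbF ?mulr0 ?subr0 //; apply/negbTE; lia.
  by rewrite sigB sigZ Sv sig_bas (_ : (0 + N - n = b)%N) ?subrr //; lia.
have eu : c%:P *: bas K n 0 + (u - c%:P *: bas K n 0) = u by rewrite addrC subrK.
have ev : d%:P *: bas K 0 n + (v - d%:P *: bas K 0 n) = v by rewrite addrC subrK.
have h1 : smul (bas K n 0) (bas K 0 n) = bas K n n by rewrite smul_bas !subnn !addn0.
have h2 : smul (bas K 0 n) (bas K n 0) = sone K by rewrite smul_bas !subnn !addn0.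
have hn := trace_arg Ff Fg cd h1 h2.
rewrite eu ev in hn; have {hn} hn := hn Huv Hvu.
have : (n%:R == 0 :> K) = (n == 0%N) by exact: (pcharf0P K).1 hK n.
rewrite hn eqxx => /esym/eqP n0; subst n.
by rewrite !scE; split.
Qed.

Lemma unit_dec (hK : [pchar K] =i pred0) u v :
  smul u v = sone K -> smul v u = sone K ->
  exists c d, [/\ c * d = 1, inF (u - sc c) & inF (v - sc d)].
Proof.
move=> Huv Hvu; case: (supp_ex2 u v) => N [su sv].
have := sig_mul su sv; rewrite Huv /sone sig_bas add0n subn0 => e.
case: (mono_fac (esym e)) => c [a [c0 Su]].
case: (mono_fac (etrans (mulrC _ _) (esym e))) => d [b [d0 Sv]].
move: e; rewrite Su Sv mulrACA -polyCM -exprD => e.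
have := congr1 (fun p : {poly K} => p`_(a + b)) e.
rewrite /= coefCM !coefXn eqxx mulr1 => e2.
have ab : (a + b = N + N)%N.
  apply/eqP; move: e2; case: eqP => // _ /esym/eqP.
  by rewrite /= mulr0n mulf_eq0 (negbTE c0) (negbTE d0).
rewrite ab eqxx in e2.
have cd : c * d = 1 by rewrite -e2.
case: (leqP N a) => Na.
  case: (unit_case hK su sv Huv Hvu Su Sv cd ab Na) => h1 h2.
  by exists c, d.
have ba : (b + a = N + N)%N by lia.
have dc : d * c = 1 by rewrite mulrC.
case: (unit_case hK sv su Hvu Huv Sv Su dc ba _) => [|h1 h2]; first by lia.
by exists c, d.
Qed.


Lemma cf_toF m i j : (toF m)`_i`_j =
  m`_i`_j - (if (0 < i)%N && (0 < j)%N then m`_i.-1`_j.-1 else 0).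
Proof.
apply/eqP; rewrite -subr_eq0; apply/eqP; move: m.
apply: (lin_extK (f := fun m => (toF m)`_i`_j -
  (m`_i`_j - (if (0 < i)%N && (0 < j)%N then m`_i.-1`_j.-1 else 0)))).
- move=> p q; rewrite toFD !cfD.
  by case: ifP => _; rewrite ?cfD; ring.
- move=> c p; rewrite toFZ !cfZ.
  by case: ifP => _; rewrite ?cfZ; ring.
move=> a b; rewrite toF_bas /Eij cfB !cf_bas.
case: i => [|i]; case: j => [|j] /=; rewrite ?andbF ?subr0; try by rewrite !subrr.
Qed.

Lemma toF_inj0 m : toF m = 0 -> m = 0.
Proof.
move=> h.
have e : forall i j, m`_i`_j = if (0 < i)%N && (0 < j)%N then m`_i.-1`_j.-1 else 0.
  by move=> i j; apply/eqP; rewrite -subr_eq0 -cf_toF h cf0.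
apply: polyPP => i; elim: i => [|i IH] j; rewrite e cf0 //=.
by case: j => [|j] //=; rewrite IH cf0.
Qed.

Lemma toF_inj m m' : toF m = toF m' -> m = m'.
Proof. by move=> h; apply/eqP; rewrite -subr_eq0; apply/eqP; apply: toF_inj0; rewrite toFB h subrr. Qed.

Lemma uF_inj (a b : P) : uF a = uF b -> a = b.
Proof. by rewrite /uF => /addrI /toF_inj. Qed.

Lemma cf_mmul_r m (i j k l : nat) :
  (mmul m (bas K i j))`_k`_l = m`_k`_i * (if l == j then 1 else 0).
Proof.
apply/eqP; rewrite -subr_eq0; apply/eqP; move: m.
apply: (lin_extK (f := fun m => (mmul m (bas K i j))`_k`_l - m`_k`_i * (if l == j then 1 else 0))).
- by move=> p q; rewrite mmulDl !cfD; ring.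
- by move=> c p; rewrite mmulZl !cfZ; ring.
move=> a b; rewrite mmul_bas; case: (b =P i) => [->|bi]; rewrite !cf_bas.
  by case: (k == a); case: (l == j) => /=; rewrite ?eqxx ?mulr1 ?mulr0 ?subrr.
by rewrite cf0 (introF eqP (nesym bi)) andbF mul0r subrr.
Qed.

Lemma cf_mmul_l m (i j k l : nat) :
  (mmul (bas K i j) m)`_k`_l = (if k == i then 1 else 0) * m`_j`_l.
Proof.
apply/eqP; rewrite -subr_eq0; apply/eqP; move: m.
apply: (lin_extK (f := fun m => (mmul (bas K i j) m)`_k`_l - (if k == i then 1 else 0) * m`_j`_l)).
- by move=> p q; rewrite mmulDr !cfD; ring.
- by move=> c p; rewrite mmulZr !cfZ; ring.
move=> a b; rewrite mmul_bas; case: (j =P a) => [->|ja]; rewrite !cf_bas.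
  by case: (k == i); case: (l == b) => /=; rewrite ?eqxx ?mulr1 ?mul1r ?mulr0 ?mul0r ?subrr.
by rewrite cf0 (introF eqP ja) /= mulr0 subrr.
Qed.

Lemma comm_zero (a : P) : (forall i j : nat, i != j -> mmul a (bas K i j) = mmul (bas K i j) a) -> a = 0.
Proof.
move=> h; case: (supp_ex a) => N sa; apply: polyPP => k l; rewrite cf0.
have := congr1 (fun p : P => p`_k`_(N + l + k).+1) (h l (N + l + k).+1 _).
  rewrite /= cf_mmul_r cf_mmul_l eqxx mulr1 => ->.
  by rewrite sa ?mulr0 //; apply/orP; left; lia.
by apply/eqP; lia.
Qed.


Lemma scaleI c p q : c != 0 -> c%:P *: p = c%:P *: q -> p = q.
Proof.
move=> c0 h; have := congr1 (fun x : P => (c^-1)%:P *: x) h.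
by rewrite /= !scalerA -polyCM mulVf // scale1r scale1r.
Qed.

Lemma uF_sub (a : P) : uF a - sone K = toF a.
Proof. by rewrite /uF addrC addKr. Qed.

Lemma uF_inv (a b : P) : circ a b = 0 -> smul (uF a) (uF b) = sone K.
Proof. by move=> h; rewrite -uF_mul h uF0. Qed.

Lemma in1F_inGL (u : P) : in1F u -> exists a, inGL a /\ u = uF a.
Proof.
case=> [[a ea] [v [[b eb] [h1 h2]]]].
have eu : u = uF a by rewrite /uF -ea addrC subrK.
have ev : v = uF b by rewrite /uF -eb addrC subrK.
exists a; split => //; exists b; split; apply: uF_inj; rewrite uF0 uF_mul -?eu -?ev //.
Qed.

Lemma inGL_in1F (a : P) : inGL a -> in1F (uF a).
Proof.
case=> b [h1 h2]; split; first by rewrite uF_sub; exact: inF_toF.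
by exists (uF b); rewrite uF_sub !uF_inv //; split => //; exact: inF_toF.
Qed.

Lemma mmul0r p : mmul p 0 = 0.
Proof. by apply: idem0; rewrite -mmulDr addr0. Qed.
Lemma mmulNr p q : mmul p (- q) = - mmul p q.
Proof. by apply/eqP; rewrite -subr_eq0 opprK -mmulDr addNr mmul0r. Qed.
Lemma mmul0l p : mmul 0 p = 0.
Proof. by apply: idem0; rewrite -mmulDl addr0. Qed.
Lemma mmulNl p q : mmul (- p) q = - mmul p q.
Proof. by apply/eqP; rewrite -subr_eq0 opprK -mmulDl addNr mmul0l. Qed.

Lemma inGL_bas (i j : nat) : i != j -> inGL (bas K i j).
Proof.
move=> ij; exists (- bas K i j); rewrite /circ mmulNr mmulNl mmul_bas eq_sym (negbTE ij).
by rewrite subrr oppr0 addr0 addNr addr0.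
Qed.

Lemma center1F (a : P) : (forall i j : nat, i != j ->
  smul (uF a) (uF (bas K i j)) = smul (uF (bas K i j)) (uF a)) -> a = 0.
Proof.
move=> h; apply: comm_zero => i j ij; have := h i j ij.
rewrite -!uF_mul => /uF_inj; rewrite /circ.
by rewrite [bas K i j + a]addrC => /addrI.
Qed.


Lemma sig_toF N m : sig N (toF m) = 0.
Proof.
case: (supp_ex m) => L sm; rewrite (toFE sm) sig_sum big1 // => i _.
rewrite sig_sum big1 // => j _.
by rewrite sigZ /Eij sigB !sig_bas addSn subSS subrr mulr0.
Qed.

End S.

Unset Implicit Arguments.

Theorem theorem4p5 (K : fieldType) (hK : [pchar K] =i pred0) :
  (* (1) units of S_1 = K^x (1+F)^x *)
  (forall u, s1unit u <->
     exists (c : K) v, c != 0 /\ in1F v /\ u = smul (sc c) v)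
  (* (1) ... ~= K^x * GL_oo(K), via (c, 1 + a) |-> c (1 + toF a) *)
  /\ (forall (c : K) a, c != 0 -> inGL a -> s1unit (smul (sc c) (uF a)))
  /\ (forall (c d : K) a b, c != 0 -> d != 0 -> inGL a -> inGL b ->
        smul (sc (c * d)) (uF (circ a b))
        = smul (smul (sc c) (uF a)) (smul (sc d) (uF b)))
  /\ (forall (c d : K) a b, c != 0 -> d != 0 -> inGL a -> inGL b ->
        smul (sc c) (uF a) = smul (sc d) (uF b) -> c = d /\ a = b)
  /\ (forall u, s1unit u ->
        exists (c : K) a, c != 0 /\ inGL a /\ u = smul (sc c) (uF a))
  (* (2) Z(units of S_1) = K^x *)
  /\ (forall u, s1unit u ->
        ((forall v, s1unit v -> smul u v = smul v u) <->
         exists c : K, c != 0 /\ u = sc c))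
  (* (2) Z((1+F)^x) = {1} *)
  /\ (forall u, in1F u ->
        ((forall v, in1F v -> smul u v = smul v u) <-> u = sone K))
  (* (3) Inn(S_1) ~= GL_oo(K) via omega_u <-> u, u = 1 + toF a in (1+F)^x *)
  /\ (forall a, inGL a -> exists f : {poly {poly K}} -> {poly {poly K}}, conj_by (uF a) f)
  /\ (forall a b (f g : {poly {poly K}} -> {poly {poly K}}), inGL a -> inGL b -> conj_by (uF a) f -> conj_by (uF b) g ->
        conj_by (uF (circ a b)) (fun s => f (g s)))
  /\ (forall a b (f : {poly {poly K}} -> {poly {poly K}}), inGL a -> inGL b -> conj_by (uF a) f -> conj_by (uF b) f ->
        a = b)
  /\ (forall w (f : {poly {poly K}} -> {poly {poly K}}), s1unit w -> conj_by w f ->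
        exists a, inGL a /\ conj_by (uF a) f).
Proof.
have C1 : forall u : {poly {poly K}}, s1unit u <->
     exists (c : K) v, c != 0 /\ in1F v /\ u = smul (sc c) v.
  move=> u; split.
    case=> v [Huv Hvu]; case: (unit_dec hK Huv Hvu) => c [d [cd Fu Fv]].
    have c0 : c != 0.
      by apply/eqP => c0; move: cd; rewrite c0 mul0r => /eqP; rewrite eq_sym oner_eq0.
    exists c, (d%:P *: u); split => //; split.
      split.
        have -> : d%:P *: u - sone K = d%:P *: (u - sc c).
          by rewrite scalerBr scE scalerA -polyCM [d * c]mulrC cd polyC1 scale1r.
        exact: inFZ.
      exists (c%:P *: v); split.
        have -> : c%:P *: v - sone K = c%:P *: (v - sc d).
          by rewrite scalerBr scE scalerA -polyCM cd polyC1 scale1r.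
        exact: inFZ.
      rewrite !smulZl !smulZr Huv Hvu !scalerA -!polyCM [d * c]mulrC cd.
      by split; rewrite mulr1 polyC1 scale1r /sone /bas !expr0 scale1r.
    by rewrite smul_scl scalerA -polyCM cd polyC1 scale1r.
  case=> c [v [c0 [[_ [w [_ [h1 h2]]]] ->]]].
  exists ((c^-1)%:P *: w); rewrite !smul_scl smulZl smulZr smulZl smulZr h1 h2.
  by split; rewrite scalerA -polyCM ?mulfV ?mulVf // polyC1 scale1r.
have C2 : forall (c : K) a, c != 0 -> inGL a -> s1unit (smul (sc c) (uF a)).
  move=> c a c0 ga; apply/C1; exists c, (uF a); split => //; split => //.
  exact: inGL_in1F.
have C5 : forall u, s1unit u ->
        exists (c : K) a, c != 0 /\ inGL a /\ u = smul (sc c) (uF a).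
  move=> u /C1 [c [v [c0 [hv ->]]]]; case: (in1F_inGL hv) => a [ga ->].
  by exists c, a.
have UB : forall i j : nat, i != j -> s1unit (uF (bas K i j)).
  move=> i j ij; have := C2 1 _ (oner_neq0 K) (@inGL_bas K _ _ ij).
  by rewrite smul_scl polyC1 scale1r.
split => //; split => //; split.
  move=> c d a b _ _ _ _; rewrite !smul_scl smulZl smulZr scalerA -polyCM uF_mul.
  by [].
split.
  move=> c d a b c0 d0 _ _; rewrite !smul_scl => h.
  have := congr1 (sig 0) h; rewrite !sigZ /uF !sigD !sig_toF /sone sig_bas !addr0.
  move/(mulIf (expf_neq0 _ (negbT (polyX_eq0 K)))) => /polyC_inj cd; subst d.
  by split => //; apply: uF_inj; apply: scaleI h.
split => //.
split.
  move=> u hu; split.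
    move=> h; case: (C5 u hu) => c [a [c0 [ga eu]]]; exists c; split => //.
    have a0 : a = 0.
      apply: center1F => i j ij; have := h _ (UB i j ij).
      by rewrite eu !smul_scl smulZl smulZr; apply: scaleI.
    by rewrite eu a0 uF0 smul1r.
  by case=> c [c0 ->] v _; rewrite smul_scl smul_scr.
split.
  move=> u hu; split.
    move=> h; case: (in1F_inGL hu) => a [ga eu].
    have a0 : a = 0.
      apply: center1F => i j ij; rewrite -eu; apply: h.
      exact: inGL_in1F (@inGL_bas K _ _ ij).
    by rewrite eu a0 uF0.
  by move=> -> v _; rewrite smul1l smul1r.
split.
  move=> a [b [h1 h2]]; exists (fun s => smul (smul (uF a) s) (uF b)) => s.
  by rewrite smulA (uF_inv h2) smul1r.
split.
  move=> a b f g _ _ hf hg s /=.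
  by rewrite uF_mul -smulA hf smulA hg -smulA.
split.
  move=> a b f [a' [ha1 ha2]] _ hfa hfb.
  have inv1 := uF_inv ha1; have inv2 := uF_inv ha2.
  have key : forall s, smul s (smul (uF a') (uF b)) = smul (smul (uF a') (uF b)) s.
    move=> s; have e := hfb s.
    have fs : f s = smul (smul (uF a) s) (uF a').
      by rewrite -hfa smulA inv1 smul1r.
    rewrite fs in e; have := congr1 (smul (uF a')) e.
    by rewrite !smulA -(smulA (uF a') (uF a)) inv2 smul1l => ->.
  have z0 : circ a' b = 0.
    by apply: center1F => i j _; rewrite uF_mul (key (uF (bas K i j))).
  have e : smul (uF a') (uF b) = sone K by rewrite -uF_mul z0 uF0.
  apply: uF_inj.
  by rewrite -[uF b]smul1l -inv1 smulA e smul1r.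
move=> w f hw hf; case: (C5 w hw) => c [a [c0 [ga ew]]].
exists a; split => // s; apply: (scaleI c0).
by move: (hf s); rewrite ew !smul_scl smulZr smulZl.
Qed.
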